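(* Let $m,n,p,q$ be positive integers and $G=K_{m,n}\vee K_{p,q}$. Then $$\tau(G)=(m+n+p+q)^2(m+p+q)^{n-1}(n+p+q)^{m-1}(p+m+n)^{q-1}(q+m+n)^{p-1}.$$
   Context: $K_{m,n}$ is the complete bipartite graph with parts of sizes $m$ and $n$. The join $G_1\vee G_2$ has vertex set $V(G_1)\sqcup V(G_2)$ and edge set $E(G_1)\cup E(G_2)\cup\{uv:u\in V(G_1),v\in V(G_2)\}$. $\tau(G)$ is the number of spanning trees of $G$. *)

(* Defs.v *)
(* Simple graphs on a finType V given by a symmetric,
   irreflexive adjacency relation e : rel V. *)
From mathcomp Require Import all_boot.
Set Implicit Arguments. Unset Strict Implicit. Unset Printing Implicit Defensive.

Definition kbip_rel (m n : nat) : rel ('I_m + 'I_n)%type :=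
  fun x y => match x, y with
             | inl _, inr _ | inr _, inl _ => true
             | _, _ => false
             end.

Arguments kbip_rel m n : clear implicits.

Definition join_rel (V1 V2 : finType) (e1 : rel V1) (e2 : rel V2)
  : rel (V1 + V2)%type :=
  fun x y => match x, y with
             | inl a, inl b => e1 a b
             | inr a, inr b => e2 a b
             | _, _ => true
             end.

Section Trees.
Variable V : finType.

Definition edge_set (e : rel V) : {set {set V}} :=
  [set A : {set V} | [exists x, exists y, e x y && (A == [set x; y])]].

Definition sub_adj (F : {set {set V}}) : rel V :=
  fun x y => (x != y) && ([set x; y] \in F).

Definition sub_connected (F : {set {set V}}) : bool :=
  [forall x, forall y, connect (sub_adj F) x y].

(* (V, F) is acyclic: no cycle x_0 x_1 ... x_{k-1} x_0 with k >= 3 distinct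
   vertices (distinct vertices force k <= #|V|). *)
Definition sub_acyclic (F : {set {set V}}) : bool :=
  [forall k : 'I_#|V|.+1, forall t : k.-tuple V,
     ~~ [&& 2 < k, uniq t & cycle (sub_adj F) t]].

Definition spanning_tree (e : rel V) (F : {set {set V}}) : bool :=
  [&& F \subset edge_set e, sub_connected F & sub_acyclic F].

Definition tau (e : rel V) : nat := #|[set F | spanning_tree e F]|.
End Trees.

(* Main.v *)
Require Import Defs.
From mathcomp Require Import all_boot all_order all_fingroup all_algebra zify ring.
Set Implicit Arguments. Unset Strict Implicit. Unset Printing Implicit Defensive.

Lemma pair_eq (T : finType) (a b c d : T) :
  [set a; b] = [set c; d] -> (a = c /\ b = d) \/ (a = d /\ b = c).
Proof.
move=> E.
have ha : a \in [set c; d] by rewrite -E set21.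
have hb : b \in [set c; d] by rewrite -E set22.
have hc : c \in [set a; b] by rewrite E set21.
have hd : d \in [set a; b] by rewrite E set22.
case/set2P: ha => ea; case/set2P: hb => eb; subst; auto;
case/set2P: hc => ec; case/set2P: hd => ed; subst; auto.
Qed.

Lemma connect_iter (V : finType) (R : rel V) (f : V -> V) (r : V) (k : nat) :
  f r = r -> (forall v, v != r -> R v (f v)) ->
  forall v, iter k f v = r -> connect R v r.
Proof.
move=> fr hR v hk.
suff H : forall j, connect R v (iter j f v) by rewrite -hk; apply: H.
elim=> [|j IH] /=; first exact: connect0.
apply: connect_trans IH _.
case: (eqVneq (iter j f v) r) => [->|ne]; first by rewrite fr connect0.
exact/connect1/hR.
Qed.

Section PartA.
Variables (V : finType) (e : rel V) (r : V).
Hypothesis esym : symmetric e.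
Hypothesis eirr : irreflexive e.

Definition valid (f : {ffun V -> V}) : bool :=
  [&& f r == r, [forall v, (v != r) ==> e v (f v)] & [forall v, iter #|V| f v == r]].

Definition Phi (f : {ffun V -> V}) : {set {set V}} :=
  (fun v => [set v; f v]) @: [set~ r].

Definition dep (f : V -> V) (v : V) : nat := \sum_(j < #|V|) (iter j f v != r).

Lemma cardV_gt0 : 0 < #|V|.
Proof. by apply/card_gt0P; exists r. Qed.

Lemma dep_r f : f r = r -> dep f r = 0.
Proof. by move=> fr; apply: big1 => j _; rewrite iter_fix ?eqxx. Qed.

Lemma dep_S f v : f r = r -> iter #|V| f v = r -> v != r -> dep f v = (dep f (f v)).+1.
Proof.
move=> fr hK vr; rewrite /dep.
move: hK; have := cardV_gt0; case: #|V| => // k _ hK.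
rewrite big_ord_recl big_ord_recr /= vr.
have -> : iter k f (f v) = r by rewrite -iterSr.
rewrite eqxx addn0 add1n; congr _.+1; apply: eq_bigr => j _.
by rewrite add0n -iterS iterSr.
Qed.

Lemma dep0 f v : dep f v = 0 -> v = r.
Proof.
rewrite /dep; have := cardV_gt0; case: #|V| => // k _.
by rewrite big_ord_recl /=; case: eqP.
Qed.

Lemma validP f : valid f ->
  [/\ f r = r, forall v, v != r -> e v (f v) & forall v, iter #|V| f v = r].
Proof.
case/and3P=> /eqP fr /forallP h1 /forallP h2; split=> //.
- by move=> v vr; move/implyP: (h1 v); apply.
- by move=> v; apply/eqP.
Qed.

Lemma fv_neq f v : valid f -> v != r -> v != f v.
Proof.
move=> /validP[_ h _] vr; apply/eqP=> E; have := h v vr.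
by rewrite -E eirr.
Qed.

Lemma sub_adj_sym (F : {set {set V}}) : symmetric (sub_adj F).
Proof. by move=> x y; rewrite /sub_adj eq_sym setUC. Qed.

Lemma Phi_adj f v : valid f -> v != r -> sub_adj (Phi f) v (f v).
Proof.
move=> vf vr; rewrite /sub_adj fv_neq //=.
by apply/imsetP; exists v => //; rewrite !inE.
Qed.

Lemma PhiP f A : A \in Phi f -> exists2 u, u != r & A = [set u; f u].
Proof. by case/imsetP=> u; rewrite !inE => ur ->; exists u. Qed.

Lemma Phi_edge f x y : [set x; y] \in Phi f ->
  exists2 u, u != r & ((x = u /\ y = f u) \/ (x = f u /\ y = u)).
Proof.
case/PhiP=> u ur /pair_eq H; exists u => //.
Qed.

Lemma Phi_tree f : valid f -> spanning_tree e (Phi f).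
Proof.
move=> vf; have [fr fe fK] := validP vf.
apply/and3P; split.
- apply/subsetP=> A /PhiP[u ur ->]; rewrite /edge_set inE.
  by apply/existsP; exists u; apply/existsP; exists (f u); rewrite fe // eqxx.
- rewrite /sub_connected; apply/forallP=> x; apply/forallP=> y.
  have cr : forall v, connect (@sub_adj V (Phi f)) v r.
    by move=> v; apply: (connect_iter (k := #|V|) fr) => // w wr; apply: Phi_adj.
  apply: connect_trans (cr x) _.
  by rewrite (sym_connect_sym (@sub_adj_sym _)) cr.
- rewrite /sub_acyclic; apply/forallP=> k; apply/forallP=> t; apply/negP=> /and3P[k2 ut ct].
  move: ut ct k2; case: t => s /= /eqP <-.
  case: s => [|x0 s0] //; set s := x0 :: s0 => us cs s2.
  have x0s : x0 \in s by rewrite mem_head.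
  have [x xs xmax] := @arg_maxnP _ x0 (mem s) (dep f) x0s.
  case/rot_to: xs => i s' rs.
  have us' : uniq (x :: s') by rewrite -rs rot_uniq.
  have cs' : path.cycle (sub_adj (Phi f)) (x :: s') by rewrite -rs rot_cycle.
  have ss' : 2 < size (x :: s') by rewrite -rs size_rot.
  have ms : forall y, y \in x :: s' -> dep f y <= dep f x.
    by move=> y; rewrite -rs mem_rot => /xmax.
  clear rs; case: s' us' cs' ss' ms => [|a s1] // us' cs' ss' ms.
  case/lastP: s1 us' cs' ss' ms => [|s3 b] // us' cs' ss' ms.
  move: cs'; rewrite /= => /andP[xa]; rewrite rcons_path => /andP[_ bx].
  rewrite last_rcons in bx.
  (* from an edge x-y with dep y <= dep x derive f x = y *)
  have key : forall y, y \in x :: a :: rcons s3 b -> sub_adj (Phi f) x y -> f x = y.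
    move=> y ym /andP[_ /Phi_edge[u ur [[ex ey]|[ex ey]]]]; first by rewrite ex ey.
    subst y x; have := ms u ym; rewrite (dep_S fr (fK u) ur) ltnn //.
  have fa : f x = a by apply: (key a) => //; rewrite !inE eqxx orbT.
  have fb : f x = b.
    by apply: (key b); [rewrite !inE mem_rcons mem_head !orbT | rewrite sub_adj_sym].
  move: us'; rewrite /= -fa fb => /and3P[_]; by rewrite mem_rcons mem_head.
Qed.

Lemma Phi_inj f g : valid f -> valid g -> Phi f = Phi g -> f = g.
Proof.
move=> vf vg E; have [fr fe fK] := validP vf; have [gr ge gK] := validP vg.
suff H : forall j v, dep g v = j -> f v = g v by apply/ffunP => v; exact: (H _ v erefl).
elim=> [|j IH] v dv.
  by rewrite (dep0 dv) fr gr.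
have vr : v != r by apply/eqP => vr; move: dv; rewrite vr dep_r.
have dw : dep g (g v) = j by move: dv; rewrite (dep_S gr (gK v) vr) => [[]].
have fw := IH _ dw.
have : [set v; g v] \in Phi f by rewrite E; apply/imsetP; exists v; rewrite ?inE.
case/Phi_edge => u ur [[ev ew]|[ev ew]]; first by rewrite ew ev.
exfalso.
have wr : g v != r by apply: contraNneq vr => gvr; rewrite ev -ew gvr fr.
have ggv : g (g v) = v by rewrite -fw ew -ev.
have := dep_S gr (gK _) wr; rewrite ggv dw dv.
by move/eqP; rewrite -addn2 -{1}[j]addn0 eqn_add2l.
Qed.

Lemma ffun_tuple_size (s : seq V) : uniq s -> size s < #|V|.+1.
Proof. by move=> us; rewrite ltnS -(card_uniqP us) max_card. Qed.

Lemma acyclic_no (F : {set {set V}}) (s : seq V) :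
  sub_acyclic F -> uniq s -> 2 < size s -> path.cycle (sub_adj F) s -> False.
Proof.
move=> /forallP/(_ (Ordinal (ffun_tuple_size _)))/forallP H us s2 cs.
have := H s us; move/(_ (Tuple (eqxx (size s)))) => /=.
by rewrite s2 us cs.
Qed.

Definition hasp (F : {set {set V}}) (x : V) (n : nat) : bool :=
  [exists t : n.-tuple V, path (sub_adj F) r t && (last r t == x)].

Lemma tree_Phi (F : {set {set V}}) : spanning_tree e F ->
  exists2 f, valid f & F = Phi f.
Proof.
case/and3P=> Fsub /forallP Fcon Facy.
have exd : forall x, exists n, hasp F x n.
  move=> x; have /connectP[p pp ->] := forallP (Fcon r) x.
  exists (size p); apply/existsP; exists (in_tuple p); by rewrite pp eqxx.
pose d x := ex_minn (exd x).
have d1 : forall x, d x = 0 -> x = r.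
  move=> x; rewrite /d; case: ex_minnP => n /existsP[t /andP[_ /eqP <-]] _ n0.
  by move: t; rewrite n0 => t; rewrite tuple0.
have d2 : forall x, x != r -> exists w, sub_adj F x w && (d w < d x).
  move=> x xr; rewrite /d; case: ex_minnP => n /existsP[t /andP[pt /eqP lt]] _.
  case: t pt lt => s /= /eqP sz; case/lastP: s sz => [|s y] sz.
    by move=> _ /= E; rewrite E eqxx in xr.
  rewrite rcons_path last_rcons => /andP[ps ey] yx; subst y.
  exists (last r s); rewrite sub_adj_sym ey /=.
  case: ex_minnP => m _ mmin; apply: leq_ltn_trans (mmin (size s) _) _.
    by apply/existsP; exists (in_tuple s); rewrite ps eqxx.
  by rewrite -sz size_rcons.
have d3 : forall x, d x < #|V|.
  move=> x; have /connectP[p pp ->] := forallP (Fcon r) x.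
  case: (shortenP pp) => p' pp' up' _.
  rewrite /d; case: ex_minnP => m _ mmin; apply: leq_ltn_trans (mmin (size p') _) _.
    by apply/existsP; exists (in_tuple p'); rewrite pp' eqxx.
  by rewrite -ltnS -[(size p').+1]/(size (r :: p')) -(card_uniqP up') ltnS max_card.
pose f := [ffun x => if x == r then r else odflt r [pick w | sub_adj F x w && (d w < d x)]].
have fr : f r = r by rewrite ffunE eqxx.
have fx : forall x, x != r -> sub_adj F x (f x) && (d (f x) < d x).
  move=> x xr; rewrite ffunE (negbTE xr); case: pickP => [w //|].
  by case: (d2 x xr) => w hw /(_ w); rewrite hw.
have fadj : forall x, x != r -> sub_adj F x (f x).
  by move=> x /fx /andP[].
have vf : valid f.
  apply/and3P; split; first by rewrite fr.
  - apply/forallP=> x; apply/implyP=> xr; have /andP[_] := fadj x xr.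
    move/(subsetP Fsub); rewrite inE => /existsP[a /existsP[b /andP[eab /eqP]]].
    by case/pair_eq=> [[-> ->]|[-> ->]] //; rewrite esym.
  - apply/forallP=> x.
    have H : forall j, iter j f x = r \/ d (iter j f x) + j <= d x.
      elim=> [|j [IH|IH]]; [by right; rewrite addn0 | by left; rewrite iterS IH fr|].
      case: (boolP (f (iter j f x) == r)) => [/eqP E|fne]; first by left.
      have yr : iter j f x != r by apply/eqP => E0; move: fne; rewrite E0 fr eqxx.
      right; have /andP[_ lt] := fx _ yr.
      by rewrite addnS; apply: leq_trans IH; rewrite ltn_add2r.
    case: (H #|V|) => [->//|]; rewrite addnC => /(leq_trans (leq_addr _ _)).
    by rewrite leqNgt d3.
exists f => //.
apply/setP=> A; apply/idP/idP; last first.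
  by case/PhiP=> u ur ->; have /andP[] := fadj u ur.
move=> AF; have := subsetP Fsub _ AF; rewrite inE => /existsP[x /existsP[y /andP[exy /eqP EA]]].
have xy : x != y by apply: contraTneq exy => ->; rewrite eirr.
case: (eqVneq (f x) y) => [fxy|fxy].
  have xr : x != r by apply: contraNneq xy => xr; rewrite -fxy xr fr.
  by rewrite EA -fxy; apply/imsetP; exists x; rewrite ?inE.
case: (eqVneq (f y) x) => [fyx|fyx].
  have yr : y != r by apply: contraNneq xy => yr; rewrite -fyx yr fr.
  by rewrite EA setUC -fyx; apply/imsetP; exists y; rewrite ?inE.
exfalso.
pose F' := F :\ A.
have adj' : forall v, v != r -> sub_adj F' v (f v).
  move=> v vr; have /andP[vf' vF] := fadj v vr; rewrite /sub_adj vf' !inE vF andbT.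
  apply/eqP; rewrite EA => /pair_eq [[ev efv]|[ev efv]].
    by rewrite -ev -efv eqxx in fxy.
  by rewrite -ev -efv eqxx in fyx.
have cr : forall v, connect (sub_adj F') v r.
  by move=> v; apply: (connect_iter (k := #|V|) fr adj'); have [] := validP vf.
have cxy : connect (sub_adj F') x y.
  apply: connect_trans (cr x) _.
  by rewrite (sym_connect_sym (@sub_adj_sym _)) cr.
case/connectP: cxy => p pp ly.
move: ly; case: (shortenP pp) => p' pp' up' _ lp'; symmetry in lp'.
case: p' pp' up' lp' => [|y1 [|y2 p3]] pp' up' lp'.
- by rewrite /= in lp'; rewrite lp' eqxx in xy.
- rewrite /= in lp'; subst y1; move: pp' => /= /andP[/andP[_]].
  by rewrite !inE -EA eqxx.
- apply: (@acyclic_no F (x :: [:: y1, y2 & p3])) => //.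
  rewrite /path.cycle rcons_path; apply/andP; split.
    apply: sub_path pp'; move=> a b /andP[ab]; rewrite /sub_adj ab !inE => /andP[].
    by [].
  by rewrite lp' /sub_adj eq_sym xy setUC -EA.
Qed.

Lemma tau_valid : tau e = #|[set f : {ffun V -> V} | valid f]|.
Proof.
rewrite /tau.
have -> : [set F | spanning_tree e F] = Phi @: [set f : {ffun V -> V} | valid f].
  apply/setP=> F; rewrite inE; apply/idP/imsetP.
    by case/tree_Phi=> f vf ->; exists f; rewrite ?inE.
  by case=> f; rewrite inE => vf ->; apply: Phi_tree.
rewrite card_in_imset // => f g; rewrite !inE => vf vg; exact: Phi_inj.
Qed.

End PartA.

Section PB0.
End PB0.
Import Order.TTheory GRing.Theory Num.Theory.
Local Open Scope ring_scope.

Section PartB.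
Variables (V : finType) (e : rel V) (r : V).
Hypothesis eirr : irreflexive e.


Lemma det_fun (G : V -> V -> rat) :
  \det ((\matrix_(i, j) G (enum_val i) (enum_val j)) : 'M[rat]_(#|V|)) =
  \sum_(s : 'S_(#|V|)) (-1) ^+ s * \prod_(x : V) G x (enum_val (s (enum_rank x))).
Proof.
rewrite /determinant; apply: eq_bigr => s _; congr (_ * _).
rewrite (reindex (@enum_rank V)) /=; last first.
  by exists (@enum_val V _) => x _; [rewrite enum_rankK | rewrite enum_valK].
by apply: eq_bigr => x _; rewrite mxE enum_rankK.
Qed.


Definition Nb (x : V) : {set V} := if x == r then [set r] else [set w | e x w].
Definition Rw (x w y : V) : rat := (x == y)%:R - ((y == w) && (w != r))%:R.
Definition LapF (x y : V) : rat := \sum_(w in Nb x) Rw x w y.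
Definition Lap : 'M[rat]_#|V| := \matrix_(i, j) LapF (enum_val i) (enum_val j).
Definition MgF (g : {ffun V -> V}) (x y : V) : rat := Rw x (g x) y.
Definition Mg (g : {ffun V -> V}) : 'M[rat]_#|V| :=
  \matrix_(i, j) MgF g (enum_val i) (enum_val j).

Lemma det_Lap_expand :
  \det Lap = \sum_(g in family (fun x => Nb x)) \det (Mg g).
Proof.
rewrite /Lap det_fun.
under eq_bigr => s _ do rewrite /LapF bigA_distr_big_dep mulr_sumr.
rewrite exchange_big /=; apply: eq_bigr => g _.
by rewrite /Mg det_fun.
Qed.

Lemma sum_delta (T : finType) (a : T) (c : rat) : \sum_(y : T) (y == a)%:R * c = c.
Proof.
rewrite (bigD1 a) //= eqxx mul1r big1 ?addr0 // => y /negbTE ->; by rewrite mul0r.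
Qed.

Lemma iter_stab (T : finType) (g : T -> T) (z : T) :
  g z = z -> forall x j, iter j g x = z -> iter #|T| g x = z.
Proof.
move=> gz x j hj.
have : fconnect g x z by rewrite -hj fconnect_iter.
rewrite fconnect_orbit => /trajectP[i ilt zi].
have ile : (i <= #|T|)%N by apply: ltnW; apply: leq_trans ilt (max_card _).
by rewrite -(subnK ile) iterD -zi iter_fix.
Qed.

Lemma det_Mg_reach (g : {ffun V -> V}) : g r = r -> (forall x, x != r -> e x (g x)) ->
  (forall x, iter #|V| g x = r) -> \det (Mg g) = 1.
Proof.
move=> gr ge gK; rewrite /Mg det_fun (bigD1 1%g) //= odd_perm1 expr0 mul1r.
rewrite [X in _ + X]big1 ?addr0.
  apply: big1 => x _; rewrite perm1 enum_rankK /MgF /Rw eqxx.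
  case: (eqVneq x r) => [->|xr]; first by rewrite gr eqxx andbF subr0.
  have : x != g x by apply: contraTneq (ge x xr) => <-; rewrite eirr.
  by move/negbTE; rewrite eq_sym => ->; rewrite subr0.
move=> s s1; apply/eqP; rewrite mulf_eq0; apply/orP; right.
pose t x := enum_val (s (enum_rank x)).
have tinj : injective t.
  by move=> x y /enum_val_inj /perm_inj /enum_rank_inj.
have [i si] : exists i, s i != i.
  apply/existsP; apply: contraR s1 => /existsPn H; apply/eqP/permP => i.
  by rewrite perm1; apply/eqP; move: (H i); rewrite negbK.
apply/prodf_eq0.
suff /existsP[y hy] : [exists y, MgF g y (t y) == 0] by exists y.
apply/existsPn => H.
have step : forall y, t y != y -> t y = g y /\ g y != r.
  move=> y ty; have yt : (y == t y) = false by rewrite eq_sym; exact: negbTE ty.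
  move: (H y); rewrite /MgF /Rw yt sub0r oppr_eq0.
  by rewrite pnatr_eq0 eqb0 negbK => /andP[/eqP -> ->].
pose x0 := enum_val i.
have tx0 : t x0 != x0 by rewrite /t /x0 enum_valK (inj_eq enum_val_inj).
have : forall j, t (iter j g x0) != iter j g x0.
  elim=> [//|j IH] /=.
  have [tg _] := step _ IH.
  apply/eqP => E; have gyy : g (iter j g x0) = iter j g x0 by apply: tinj; rewrite E tg.
  by rewrite tg gyy eqxx in IH.
move/(_ #|V|); rewrite gK => trr.
by have [_] := step _ trr; rewrite gr eqxx.
Qed.

Lemma det_Mg_noreach (g : {ffun V -> V}) : g r = r ->
  ~~ [forall x, iter #|V| g x == r] -> \det (Mg g) = 0.
Proof.
move=> gr /forallPn[x0 hx0].
pose S := [set x | iter #|V| g x != r].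
have Sr : r \notin S by rewrite inE negbK iter_fix.
have Sg : forall x, (g x \in S) = (x \in S).
  move=> x; rewrite !inE; apply/idP/idP; apply: contra => /eqP H.
  - by rewrite -iterSr iterS H gr.
  - by apply/eqP; apply: (iter_stab gr (j := #|V|.+1)); rewrite iterSr.
apply/eqP; rewrite -det_tr; apply/det0P.
exists (\row_j ((enum_val j \in S)%:R : rat)).
  apply/eqP => /rowP /(_ (enum_rank x0)); rewrite !mxE enum_rankK inE hx0.
  by move/eqP; rewrite oner_eq0.
apply/rowP=> i; rewrite !mxE.
rewrite (reindex (@enum_rank V)) /=; last first.
  by exists (@enum_val V _) => x _; [rewrite enum_rankK | rewrite enum_valK].
set x := enum_val i.
transitivity (\sum_(y : V) (((y == x)%:R * (x \in S)%:R
                  - (y == g x)%:R * ((g x != r) && (g x \in S))%:R) : rat)).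
  apply: eq_bigr => y _; rewrite !mxE !enum_rankK /MgF /Rw.
  rewrite mulrBr; congr (_ - _).
    by rewrite eq_sym; case: eqP => [->|]; rewrite ?mulr1 ?mul1r ?mul0r ?mulr0.
  rewrite /x; case: (eqVneq y (g (enum_val i))) => [->|ne].
    by rewrite /=; case: (_ \in S); case: (_ != r); rewrite /= ?mulr1 ?mulr0 ?mul1r ?mul0r.
  by rewrite /= mulr0 mul0r.
rewrite sumrB !sum_delta.
case: (eqVneq (g x) r) => [gxr|gxr] /=.
  by rewrite -Sg gxr (negbTE Sr) subr0.
by rewrite Sg subrr.
Qed.

Lemma fam_valid (g : {ffun V -> V}) :
  (g \in family (fun x => Nb x)) = (g r == r) && [forall v, (v != r) ==> e v (g v)].
Proof.
apply/familyP/andP => [H|[/eqP gr /forallP ge] x].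
  split; first by move: (H r); rewrite /Nb eqxx inE.
  apply/forallP => v; apply/implyP => vr; move: (H v).
  by rewrite /Nb (negbTE vr) inE.
rewrite /Nb; case: eqP => [->|/eqP xr]; first by rewrite gr inE.
by rewrite inE; move/implyP: (ge x); apply.
Qed.

Lemma det_Lap_valid : \det Lap = #|[set f : {ffun V -> V} | valid e r f]|%:R.
Proof.
rewrite det_Lap_expand.
transitivity (\sum_(g in family (fun x => Nb x))
                 (if [forall x, iter #|V| g x == r] then 1 else 0 : rat)).
  apply: eq_bigr => g gf.
  have /andP[/eqP gr /forallP ge] : (g r == r) && [forall v, (v != r) ==> e v (g v)].
    by rewrite -fam_valid; exact: gf.
  case: ifP => H.
    apply: det_Mg_reach => // [x xr|x]; first by move/implyP: (ge x); apply.
    by apply/eqP; move/forallP: H; apply.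
  by apply: det_Mg_noreach => //; rewrite H.
rewrite -big_mkcondr sumr_const; congr (_ *+ _).
by apply: eq_card => g; rewrite [in RHS]inE /valid andbA -fam_valid.
Qed.

End PartB.

Local Close Scope ring_scope.
Local Open Scope ring_scope.

Lemma sylvester (R : comNzRingType) n k (A : 'M[R]_(n, k)) (B : 'M[R]_(k, n)) :
  \det (1%:M - A *m B) = \det (1%:M - B *m A).
Proof.
have E1 : block_mx 1%:M A B 1%:M =
    block_mx 1%:M 0 B 1%:M *m block_mx 1%:M A 0 (1%:M - B *m A).
  rewrite mulmx_block !mul1mx !mul0mx ?mulmx0 !mulmx1 ?addr0 ?add0r.
  by rewrite addrC subrK.
have E2 : block_mx 1%:M A B 1%:M =
    block_mx (1%:M - A *m B) A 0 1%:M *m block_mx 1%:M 0 B 1%:M.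
  rewrite mulmx_block !mul1mx !mul0mx ?mulmx0 !mulmx1 ?addr0 ?add0r.
  by rewrite subrK.
have := congr1 (@determinant _ _) E1; rewrite E2 !det_mulmx ?det_lblock ?det_ublock ?det1.
by rewrite !mul1r !mulr1 => ->.
Qed.

Lemma det_diag_minus n k (d : 'I_n -> rat) (A : 'M[rat]_(n, k)) (B : 'M[rat]_(k, n)) :
  (forall i, d i != 0) ->
  \det (\matrix_(i, j) ((i == j)%:R * d i - (A *m B) i j)) =
  (\prod_i d i) * \det (1%:M - B *m \matrix_(i, l) (A i l / d i)).
Proof.
move=> dnz.
have -> : \matrix_(i, j) ((i == j)%:R * d i - (A *m B) i j) =
   diag_mx (\row_i d i) *m (1%:M - \matrix_(i, l) (A i l / d i) *m B).
  apply/matrixP=> i j; rewrite mul_diag_mx !mxE mulrBr; congr (_ - _).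
    by rewrite mulrC.
  rewrite mulr_sumr; apply: eq_bigr => l _; rewrite mxE mulrA.
  by congr (_ * _); rewrite mulrCA divff // mulr1.
by rewrite det_mulmx det_diag sylvester; congr (_ * _); apply: eq_bigr => i _; rewrite mxE.
Qed.

Local Close Scope ring_scope.

Section PartC.
Variables (m n p q : nat).

Local Notation VC := (('I_m.+1 + 'I_n) + ('I_p + 'I_q))%type.
Definition eC : rel VC := join_rel (kbip_rel m.+1 n) (kbip_rel p q).
Definition rC : VC := inl (inl ord0).
Definition PC (x : VC) : 'I_4 :=
  match x with
  | inl (inl _) => @Ordinal 4 0 isT
  | inl (inr _) => @Ordinal 4 1 isT
  | inr (inl _) => @Ordinal 4 2 isT
  | inr (inr _) => @Ordinal 4 3 isT
  end.

Lemma eCP x y : eC x y = (PC x != PC y).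
Proof. by case: x => [[a|a]|[a|a]]; case: y => [[b|b]|[b|b]]. Qed.

Lemma eC_sym : symmetric eC.
Proof. by move=> x y; rewrite !eCP eq_sym. Qed.

Lemma eC_irr : irreflexive eC.
Proof. by move=> x; rewrite eCP eqxx. Qed.

Definition cC (t : 'I_4) : nat :=
  match val t with 0 => n + p + q | 1 => m.+1 + p + q | 2 => m.+1 + n + q | _ => m.+1 + n + p end.

Lemma deg_card x : #|[set w | eC x w]| = cC (PC x).
Proof.
rewrite -sum1_card big_mkcond /= !big_sumType /=.
under eq_bigr do rewrite inE eCP.
under [X in _ + X + _]eq_bigr do rewrite inE eCP.
under [X in _ + (X + _)]eq_bigr do rewrite inE eCP.
under [X in _ + (_ + X)]eq_bigr do rewrite inE eCP.
case: x => [[a|a]|[a|a]] /=; rewrite !sum_nat_const !card_ord /cC /=; lia.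
Qed.

Local Open Scope ring_scope.

Definition dC (x : VC) : rat := if x == rC then 1 else (cC (PC x))%:R.

Lemma sum_delta' (T : finType) (a : T) (c : rat) : \sum_(y : T) (a == y)%:R * c = c.
Proof.
rewrite (bigD1 a) //= eqxx mul1r big1 ?addr0 // => y; rewrite eq_sym => /negbTE ->.
by rewrite mul0r.
Qed.

Lemma LapF_C x y : LapF eC rC x y =
  (x == y)%:R * dC x - ((x != rC) && (y != rC) && (PC x != PC y))%:R.
Proof.
rewrite /LapF /Nb /dC; case: (eqVneq x rC) => [->|xr].
  by rewrite big_set1 /Rw eqxx andbF mulr1.
rewrite sumrB sumr_const deg_card; congr (_ - _); first by rewrite mulr_natr.
rewrite big_mkcond /=.
transitivity (\sum_(w : VC) ((y == w)%:R * ((y != rC) && (PC x != PC y))%:R : rat)).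
  apply: eq_bigr => w _; rewrite inE eCP.
  case: (eqVneq y w) => [->|ne]; first by rewrite mul1r; case: ifP => H; rewrite /= ?H ?andbT ?andbF.
  by rewrite mul0r; case: ifP.
by rewrite sum_delta'.
Qed.

Hypotheses (hn : (0 < n)%N) (hp : (0 < p)%N) (hq : (0 < q)%N).

Lemma cC_gt0 t : (0 < cC t)%N.
Proof. by case: t => [[|[|[|[|t]]]] ht] //=; rewrite /cC /=; lia. Qed.

Lemma dC_nz x : dC x != 0.
Proof. by rewrite /dC; case: ifP => _; rewrite ?oner_eq0 // pnatr_eq0 -lt0n cC_gt0. Qed.

Definition AC : 'M[rat]_(#|{: VC}|, 4) :=
  \matrix_(i, u) ((enum_val i != rC) && (PC (enum_val i) == u))%:R.
Definition BC : 'M[rat]_(4, #|{: VC}|) :=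
  \matrix_(u, j) ((enum_val j != rC) && (PC (enum_val j) != u))%:R.

Lemma Lap_C : Lap eC rC =
  \matrix_(i, j) ((i == j)%:R * dC (enum_val i) - (AC *m BC) i j).
Proof.
apply/matrixP => i j; rewrite !mxE LapF_C (inj_eq enum_val_inj); congr (_ - _).
transitivity (\sum_(u < 4) ((PC (enum_val i) == u)%:R *
   ((enum_val i != rC) && (enum_val j != rC) && (PC (enum_val i) != PC (enum_val j)))%:R : rat)).
  by rewrite sum_delta'.
apply: eq_bigr => u _; rewrite !mxE.
case: (eqVneq (PC (enum_val i)) u) => [<-|ne]; last by rewrite !andbF !mul0r.
rewrite !andbT mul1r [PC (enum_val j) == _]eq_sym.
by case: (enum_val i != rC); rewrite /= ?mul1r ?mul0r.
Qed.

Definition sC (t : 'I_4) : rat := \sum_(x : VC) ((x != rC) && (PC x == t))%:R / dC x.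

Lemma reindexC (F : VC -> rat) : \sum_(i < #|{: VC}|) F (enum_val i) = \sum_(x : VC) F x.
Proof.
rewrite (reindex (@enum_rank VC)) /=; last first.
  by exists (@enum_val VC _) => x _; [rewrite enum_rankK | rewrite enum_valK].
by apply: eq_bigr => x _; rewrite enum_rankK.
Qed.

Lemma reindexCp (F : VC -> rat) : \prod_(i < #|{: VC}|) F (enum_val i) = \prod_(x : VC) F x.
Proof.
rewrite (reindex (@enum_rank VC)) /=; last first.
  by exists (@enum_val VC _) => x _; [rewrite enum_rankK | rewrite enum_valK].
by apply: eq_bigr => x _; rewrite enum_rankK.
Qed.

Lemma BA_C : BC *m \matrix_(i, l) (AC i l / dC (enum_val i)) =
  \matrix_(u, t) ((t != u)%:R * sC t).
Proof.
apply/matrixP => u t; rewrite !mxE /sC mulr_sumr.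
rewrite -(reindexC (fun x => (t != u)%:R * (((x != rC) && (PC x == t))%:R / dC x))).
apply: eq_bigr => i _; rewrite !mxE !mulrA; congr (_ * _).
case: (eqVneq (PC (enum_val i)) t) => [<-|ne]; last by rewrite !andbF !mulr0.
by case: (_ != rC); rewrite /= ?mulr1 ?mul1r ?mulr0 ?mul0r.
Qed.

Definition uC (t : 'I_4) : nat :=
  match val t with 0 => m | 1 => n | 2 => p | _ => q end.

Lemma count_u t : (\sum_(x : VC) ((x != rC) && (PC x == t)))%N = uC t.
Proof.
rewrite !big_sumType /= big_ord_recl /=.
by case: t => [[|[|[|[|t]]]] ht] //=; rewrite /uC /= !sum_nat_const !card_ord; lia.
Qed.

Lemma sC_val t : sC t = (uC t)%:R / (cC t)%:R.
Proof.
rewrite /sC.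
transitivity (\sum_(x : VC) (((x != rC) && (PC x == t))%:R / (cC t)%:R : rat)).
  apply: eq_bigr => x _; case: (eqVneq (PC x) t) => [<-|]; last by rewrite andbF !mul0r.
  rewrite /dC; case: (eqVneq x rC) => [->|//]; by rewrite /= !mul0r.
by rewrite -mulr_suml -natr_sum count_u.
Qed.

Lemma sC_nz u : 1 + sC u != 0.
Proof.
rewrite sC_val; apply: lt0r_neq0; apply: (@lt_le_trans _ _ 1); first by [].
by rewrite lerDl divr_ge0 ?ler0n.
Qed.

Lemma det_Lap_C1 : \det (Lap eC rC) =
  (\prod_(x : VC) dC x) * ((\prod_(u < 4) (1 + sC u)) *
     (1 - \sum_(u < 4) sC u * (1 / (1 + sC u)))).
Proof.
rewrite Lap_C det_diag_minus; last by move=> i; apply: dC_nz.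
rewrite reindexCp; congr (_ * _).
rewrite BA_C.
have -> : 1%:M - \matrix_(u, t) ((t != u)%:R * sC t) =
   \matrix_(u, t) ((u == t)%:R * (1 + sC u) -
     ((const_mx 1 : 'M[rat]_(4, 1)) *m \row_(t < 4) sC t) u t).
  apply/matrixP => u t; rewrite !mxE big_ord1 !mxE mul1r.
  case: (eqVneq u t) => [->|ne]; first by rewrite /= mul0r subr0 mul1r addrK.
  by rewrite /= mul0r mul1r sub0r.
rewrite det_diag_minus; last by move=> u; apply: sC_nz.
congr (_ * _); rewrite det_mx11 !mxE; congr (_ - _).
by apply: eq_bigr => u _; rewrite !mxE.
Qed.

Lemma prod_dC : \prod_(x : VC) dC x =
  ((n + p + q)%:R ^+ m * (m.+1 + p + q)%:R ^+ n) *
  ((m.+1 + n + q)%:R ^+ p * (m.+1 + n + p)%:R ^+ q).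
Proof.
rewrite !big_sumType /= big_ord_recl /= /dC /= mul1r.
by rewrite !prodr_const !card_ord /cC /=.
Qed.

End PartC.

Local Open Scope ring_scope.

Lemma det_final (m n p q : nat) :
  \det (Lap (@eC m n.+1 p.+1 q.+1) (@rC m n.+1 p.+1 q.+1)) =
  ((m.+1 + n.+1 + p.+1 + q.+1) ^ 2 * (m.+1 + p.+1 + q.+1) ^ (n.+1 - 1)
   * (n.+1 + p.+1 + q.+1) ^ (m.+1 - 1) * (p.+1 + m.+1 + n.+1) ^ (q.+1 - 1)
   * (q.+1 + m.+1 + n.+1) ^ (p.+1 - 1))%:R.
Proof.
rewrite det_Lap_C1 // prod_dC.
rewrite !big_ord_recl !big_ord0 !sC_val // /uC /cC /=.
have e1 : (p.+1 + m.+1 + n.+1 = m.+1 + n.+1 + p.+1)%N by lia.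
have e2 : (q.+1 + m.+1 + n.+1 = m.+1 + n.+1 + q.+1)%N by lia.
rewrite e1 e2 !subn1 /= !natrM !natrX !exprS.
set P0 := _ ^+ m; set P1 := _ ^+ n; set P2 := _ ^+ p; set P3 := _ ^+ q.
rewrite !natrD !mulrS.
field.
by rewrite -!mulrS -!natrD !pnatr_eq0 !addSn /= ?addnS.
Qed.

Local Close Scope ring_scope.

Theorem corollary4p2 (m n p q : nat) :
  0 < m -> 0 < n -> 0 < p -> 0 < q ->
  tau (join_rel (kbip_rel m n) (kbip_rel p q)) =
  (m + n + p + q) ^ 2 * (m + p + q) ^ (n - 1) * (n + p + q) ^ (m - 1)
    * (p + m + n) ^ (q - 1) * (q + m + n) ^ (p - 1).
Proof.
case: m => // m; case: n => // n; case: p => // p; case: q => // q => _ _ _ _.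
have := det_final m n p q.
rewrite (det_Lap_valid (@rC m n.+1 p.+1 q.+1) (@eC_irr m n.+1 p.+1 q.+1)).
rewrite -(tau_valid (@rC m n.+1 p.+1 q.+1) (@eC_sym m n.+1 p.+1 q.+1) (@eC_irr m n.+1 p.+1 q.+1)).
by move/eqP; rewrite eqr_nat => /eqP.
Qed.
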